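(* Let $M,M'\in\mathrm{GL}(2,\mathbb{Z})$ be hyperbolic (no eigenvalue on the unit circle) and suppose they have the same fixed point counts, i.e. $a_m(M)=a_m(M')$ for all $m\in\mathbb{N}$, where $a_m(M)=\#\{x\in\mathbb{T}^2: M^m x=x\ (\mathrm{mod}\ 1)\}$. Then $\zeta_M(t)=\zeta_{M'}(t)$, where $\zeta_M(t)=\exp\big(\sum_{m\ge1}\frac{a_m(M)}{m}t^m\big)$. This implies $\det(M')=\det(M)$ and either $\mathrm{trace}(M')=\mathrm{trace}(M)$, or $\mathrm{trace}(M')=-\mathrm{trace}(M)$ together with $\det(M)=-1$.
   Context: $\mathbb{T}^2=\mathbb{R}^2/\mathbb{Z}^2$, with integer matrices acting by matrix multiplication mod $1$. *)

(* Defs.v *)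
From HB Require Import structures.
From mathcomp Require Import all_boot all_order all_algebra all_field.
From mathcomp Require Import finmap.
From mathcomp Require Import all_classical all_reals all_analysis.
Set Implicit Arguments. Unset Strict Implicit. Unset Printing Implicit Defensive.
Import Order.TTheory GRing.Theory Num.Theory.
Local Open Scope classical_set_scope.
Local Open Scope ring_scope.

Definition GL2Z (M : 'M[int]_2) : Prop := M \in unitmx.

Definition hyperbolic (M : 'M[int]_2) : Prop :=
  forall z : algC, eigenvalue (map_mx (fun k : int => k%:~R) M) z -> `|z| != 1.

(* Points of T^2 = R^2/Z^2, represented by column vectors with coordinates in
   [0,1); the set of x with M^m x = x (mod 1). *)
Definition fixset (R : realType) (M : 'M[int]_2) (m : nat) : set 'cV[R]_2 :=
  [set x : 'cV[R]_2 | (forall i, 0 <= x i 0 < 1) /\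
     exists k : 'cV[int]_2,
       map_mx (fun z : int => z%:~R) (M ^+ m) *m x - x = map_mx (fun z : int => z%:~R) k].

(* a_m(M) = #{x in T^2 : M^m x = x mod 1} (finite for hyperbolic M;
   fset_set returns the empty set, i.e. count 0, for infinite sets). *)
Arguments fixset : clear implicits.

Definition fixcount (R : realType) (M : 'M[int]_2) (m : nat) : nat :=
  #|` fset_set (fixset R M m)|%fset.

Arguments fixcount : clear implicits.

Definition zeta (R : realType) (M : 'M[int]_2) (t : R) : R :=
  expR (limn (fun n : nat => \sum_(1 <= m < n) ((fixcount R M m)%:R / m%:R * t ^+ m))).
Arguments zeta : clear implicits.

(* Main.v *)
Require Import Defs.
From HB Require Import structures.
From mathcomp Require Import all_boot all_order all_algebra all_field.
From mathcomp Require Import finmap.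
From mathcomp Require Import all_classical all_reals all_analysis.
From mathcomp Require Import ring lra zify.
Import Order.TTheory GRing.Theory Num.Theory.
Local Open Scope ring_scope.
Section S.
Variable R : realType.

Definition isint (x : R) := exists z : int, x = z%:~R.
Definition fr (x : R) := x - (Num.floor x)%:~R.

Lemma fr_box x : 0 <= fr x < 1.
Proof.
rewrite /fr subr_ge0 floor_le /= ltrBlDr.
by have := floorD1_gt x; rewrite intrD addrC.
Qed.

Lemma fr_int x : isint (x - fr x).
Proof. by exists (Num.floor x); rewrite /fr opprB addrC subrK. Qed.

Lemma fr_uniq x y : 0 <= x < 1 -> isint (x - y) -> fr y = x.
Proof.
move=> /andP[x0 x1] [z ez].
have -> : y = x - z%:~R by rewrite -ez opprB addrC subrK.
rewrite /fr; suff -> : Num.floor (x - z%:~R) = - z by rewrite mulrNz opprK subrK.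
apply: floor_def; rewrite intrD mulrNz; apply/andP; split; lra.
Qed.

Lemma int_small (z : int) : -1 < (z%:~R : R) < 1 -> z = 0.
Proof.
move=> /andP[h1 h2].
have h1' : (-1 < z)%R by rewrite -(ltr_int R) mulrNz.
have h2' : (z < 1)%R by rewrite -(ltr_int R).
lia.
Qed.

Notation iR := (intr : int -> R).
Definition isintv (v : 'cV[R]_2) := exists k : 'cV[int]_2, v = map_mx iR k.
Definition inbox (v : 'cV[R]_2) := forall i, 0 <= v i 0 < 1.
Definition fv (v : 'cV[R]_2) : 'cV[R]_2 := \col_i fr (v i 0).

Lemma isintvP v : isintv v <-> forall i, isint (v i 0).
Proof.
split=> [[k ->] i|h]; first by exists (k i 0); rewrite mxE.
exists (\col_i Num.floor (v i 0)); apply/matrixP => i j.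
rewrite !mxE (ord1 j); have [z ->] := h i; by rewrite intrKfloor.
Qed.

Lemma isintvD v w : isintv v -> isintv w -> isintv (v + w).
Proof. by move=> [k ->] [l ->]; exists (k + l); rewrite map_mxD. Qed.
Lemma isintvN v : isintv v -> isintv (- v).
Proof. by move=> [k ->]; exists (- k); rewrite map_mxN. Qed.
Lemma isintvB v w : isintv v -> isintv w -> isintv (v - w).
Proof. by move=> ? ?; apply: isintvD => //; apply: isintvN. Qed.
Lemma isintvM (B : 'M[int]_2) v : isintv v -> isintv (map_mx iR B *m v).
Proof. by move=> [k ->]; exists (B *m k); rewrite map_mxM. Qed.
Lemma isintv0 : isintv 0.
Proof. by exists 0; rewrite map_mx0. Qed.

Lemma fv_box v : inbox (fv v).
Proof. by move=> i; rewrite mxE fr_box. Qed.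
Lemma fv_int v : isintv (v - fv v).
Proof. by apply/isintvP => i; rewrite !mxE; apply: fr_int. Qed.
Lemma fv_uniq x v : inbox x -> isintv (x - v) -> fv v = x.
Proof.
move=> bx /isintvP h; apply/matrixP => i j; rewrite (ord1 j) mxE.
apply: fr_uniq; first exact: bx.
by have := h i; rewrite !mxE.
Qed.
Lemma box_uniq v w : inbox v -> inbox w -> isintv (v - w) -> v = w.
Proof.
move=> bv bw h; rewrite -(@fv_uniq v w bv h); apply: (@fv_uniq w w bw).
by rewrite subrr; apply: isintv0.
Qed.

Lemma absz_R (d : int) : ((`|d|%N)%:R : R) = `|(d%:~R : R)|.
Proof. by rewrite natr_absz intr_norm. Qed.

Lemma scal_a (d : int) (k : nat) : d != 0 ->
  isint (d%:~R * (k%:R / (`|d|%N)%:R)).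
Proof.
move=> d0; rewrite absz_R.
have dR0 : (d%:~R : R) != 0 by rewrite intr_eq0.
have [dp|dn] := ltP 0 d.
  exists k; rewrite ger0_norm ?ler0z ?ltW // -pmulrn; field; exact: dR0.
exists (- k%:Z); rewrite ler0_norm ?lerz0 // intrN -pmulrn; field; exact: dR0.
Qed.

Lemma scal_b (d : int) (u : R) (z : int) : d != 0 -> 0 <= u < 1 ->
  d%:~R * u = z%:~R -> exists k : 'I_(`|d|%N), u = k%:R / (`|d|%N)%:R.
Proof.
move=> d0 /andP[u0 u1] e.
have dR0 : (d%:~R : R) != 0 by rewrite intr_eq0.
pose z' := if (0 < d) then z else - z.
have e' : (`|d|%N)%:R * u = z'%:~R.
  rewrite absz_R /z'; have [dp|dn] := ltP 0 d.
    by rewrite ger0_norm ?ler0z ?ltW.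
  by rewrite ler0_norm ?lerz0 // intrN -e mulNr.
have nR : (0 : R) < (`|d|%N)%:R by rewrite ltr0n absz_gt0.
have z0 : (0 <= z')%R.
  by rewrite -(ler_int R) -e' mulr_ge0 // ltW.
have z1 : (z' < (`|d|%N)%:Z)%R.
  rewrite -(ltr_int R) -e' pmulrn.
  have -> : (`|d|%N)%:Z%:~R = ((`|d|%N)%:R : R) by rewrite pmulrn.
  by rewrite -[X in _ < X]mulr1 ltr_pM2l.
have kl : (`|z'|%N < `|d|%N)%N by lia.
exists (Ordinal kl) => /=.
rewrite natr_absz ger0_norm // -e'; field; by rewrite gt_eqF.
Qed.
Definition Sset (A : 'M[int]_2) : set 'cV[R]_2 :=
  [set x | inbox x /\ isintv (map_mx iR A *m x)].

Lemma card_Sset A : \det A != 0 -> #|` fset_set (Sset A)|%fset = `|\det A|%N.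
Proof.
move=> dA.
have [L uL [Q uQ [d _ eA]]] := int_Smith_normal_form A.
pose D : 'M[int]_2 := \matrix_(i, j) (d`_i *+ (i == j :> nat)).
have eA' : A = L *m D *m Q by exact: eA.
have eD : D = diag_mx (\row_i d`_i) by apply/matrixP => i j; rewrite !mxE.
have detD : \det D = d`_0 * d`_1.
  by rewrite eD det_diag !big_ord_recl big_ord0 mulr1 !mxE.
have unit1 (B : 'M[int]_2) : B \in unitmx -> \det B = 1 \/ \det B = -1.
  by rewrite unitmxE => /orP[] /eqP ->; [left|right].
have detA : `|\det A|%N = absz (d`_0 * d`_1).
  rewrite eA' !det_mulmx detD.
  by case: (unit1 L uL) => ->; case: (unit1 Q uQ) => ->;
   rewrite ?mul1r ?mulr1 ?mulN1r ?mulrN1 ?opprK ?abszN.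
have [d0 d1] : d`_0 != 0 /\ d`_1 != 0.
  by move: dA; rewrite eA' !det_mulmx detD !mulf_eq0 !negb_or => /andP[/andP[_ /andP[]]].
pose n1 := absz d`_0; pose n2 := absz d`_1.
have n10 : (n1%:R : R) != 0 by rewrite pnatr_eq0 absz_eq0.
have n20 : (n2%:R : R) != 0 by rewrite pnatr_eq0 absz_eq0.
pose Qi := invmx Q; pose Li := invmx L.
have QR : map_mx iR Q *m map_mx iR Qi = 1.
  by rewrite -map_mxM mulmxV // map_mx1.
have QiR : map_mx iR Qi *m map_mx iR Q = 1.
  by rewrite -map_mxM mulVmx // map_mx1.
have LiR : map_mx iR Li *m map_mx iR L = 1.
  by rewrite -map_mxM mulVmx // map_mx1.
have DR (y : 'cV[R]_2) i : (map_mx iR D *m y) i 0 = (d`_i)%:~R * y i 0.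
  have -> : map_mx iR D = diag_mx (\row_i (d`_i)%:~R).
    apply/matrixP => i' j'; rewrite !mxE.
    have [->|ne] := eqVneq i' j'; first by rewrite !eqxx /= !mulr1n.
    have ne' : (i' == j' :> nat) = false by apply/negbTE; exact: ne.
    by rewrite ne' /= !mulr0n.
  by rewrite mul_diag_mx !mxE.
pose T := ('I_n1 * 'I_n2)%type.
pose yv (k : T) : 'cV[R]_2 :=
  \col_i (if (i : nat) == 0%N then (k.1 : nat)%:R / n1%:R else (k.2 : nat)%:R / n2%:R).
have ybox k : inbox (yv k).
  move=> i; rewrite mxE; case: ifP => _; apply/andP; split.
  - by rewrite divr_ge0.
  - rewrite ltr_pdivrMr; last by rewrite ltr0n absz_gt0.
    by rewrite mul1r ltr_nat.
  - by rewrite divr_ge0.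
  - rewrite ltr_pdivrMr; last by rewrite ltr0n absz_gt0.
    by rewrite mul1r ltr_nat.
pose g (k : T) := fv (map_mx iR Qi *m yv k).
have i01 (i : 'I_2) : (i : nat) != 0%N -> (i : nat) = 1%N.
  by case: i => [[|[|]]].
have Dy k : isintv (map_mx iR D *m yv k).
  apply/isintvP => i; rewrite DR mxE; case: ifP => [/eqP ->|/negbT /i01 ->].
    exact: scal_a.
  exact: scal_a.
have AR : map_mx iR A = map_mx iR L *m map_mx iR D *m map_mx iR Q.
  by rewrite eA' !map_mxM.
have ginj : injective g.
  move=> k k' e.
  have h1 : isintv (map_mx iR Qi *m yv k - map_mx iR Qi *m yv k').
    have -> : map_mx iR Qi *m yv k - map_mx iR Qi *m yv k' =
       (map_mx iR Qi *m yv k - g k) - (map_mx iR Qi *m yv k' - g k').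
      by rewrite e opprB addrA subrK.
    by apply: isintvB; apply: fv_int.
  have h2 : isintv (yv k - yv k').
    have := @isintvM Q _ h1; rewrite -mulmxBr mulmxA QR mul1mx.
    by [].
  have ey := @box_uniq _ _ (ybox k) (ybox k') h2.
  have e1 : (k.1 : nat)%:R / n1%:R = (k'.1 : nat)%:R / n1%:R :> R.
    by have := congr1 (fun v : 'cV[R]_2 => v 0 0) ey; rewrite !mxE.
  have e2 : (k.2 : nat)%:R / n2%:R = (k'.2 : nat)%:R / n2%:R :> R.
    by have := congr1 (fun v : 'cV[R]_2 => v 1 0) ey; rewrite !mxE.
  move: e1 e2 => /(mulIf (invr_neq0 n10)) /eqP; rewrite eqr_nat => /eqP/val_inj e1.
  move=> /(mulIf (invr_neq0 n20)) /eqP; rewrite eqr_nat => /eqP/val_inj e2.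
  by case: k k' e1 e2 {e ey h1 h2} => [a b] [a' b'] /= -> ->.
have eS : Sset A = [set` [fset g k | k : T]%fset]%classic.
  apply/seteqP; split => x /=.
  - move=> [bx hx]; apply/imfsetP => /=.
    pose w := map_mx iR Q *m x.
    have hw : isintv (map_mx iR D *m w).
      have := @isintvM Li _ hx.
      by rewrite AR !mulmxA LiR mul1mx.
    pose u := fv w.
    have hu : isintv (map_mx iR D *m u).
      have -> : map_mx iR D *m u = map_mx iR D *m w - map_mx iR D *m (w - u).
        by rewrite mulmxBr opprB addrC subrK.
      by apply: isintvB => //; apply: isintvM; apply: fv_int.
    have bu : inbox u by apply: fv_box.
    move/isintvP: hu => hu.
    have [z0 ez0] := hu 0; have [z1 ez1] := hu 1.
    rewrite DR in ez0; rewrite DR in ez1.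
    have [k1 ek1] := @scal_b _ _ _ d0 (bu 0) ez0.
    have [k2 ek2] := @scal_b _ _ _ d1 (bu 1) ez1.
    exists (k1, k2) => //.
    have eu : u = yv (k1, k2).
      apply/matrixP => i j; rewrite (ord1 j) [RHS]mxE /=.
      case: ifP => [/eqP h|/negbT /i01 h].
        by have -> : i = 0 by apply: val_inj.
      by have -> : i = 1 by apply: val_inj.
    rewrite /g -eu; symmetry; apply: fv_uniq => //.
    have -> : x - map_mx iR Qi *m u = map_mx iR Qi *m (w - u).
      by rewrite mulmxBr /w mulmxA QiR mul1mx.
    by apply: isintvM; apply: fv_int.
  - case/imfsetP => k _ -> {x}; split; first exact: fv_box.
    have -> : map_mx iR A *m g k =
       map_mx iR A *m (map_mx iR Qi *m yv k)
       - map_mx iR A *m (map_mx iR Qi *m yv k - g k).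
      by rewrite mulmxBr opprB addrC subrK.
    apply: isintvB; last by apply: isintvM; apply: fv_int.
    rewrite AR -!mulmxA (mulmxA (map_mx iR Q)) QR mul1mx mulmxA.
    by rewrite -mulmxA; apply: (@isintvM L); apply: Dy.
rewrite eS set_fsetK card_imfset //= detA -cardE card_prod !card_ord.
by rewrite abszM.
Qed.
Lemma fixset_S (M : 'M[int]_2) m : Defs.fixset R M m = Sset (M ^+ m - 1).
Proof.
rewrite /Defs.fixset /Sset; apply/seteqP; split => x /= [b [k e]]; split=> //; exists k.
  by rewrite -e map_mxB map_mx1 mulmxBl mul1mx.
by rewrite -e map_mxB map_mx1 mulmxBl mul1mx.
Qed.

Lemma fixcount_det (M : 'M[int]_2) m : \det (M ^+ m - 1) != 0 ->
  fixcount R M m = absz (\det (M ^+ m - 1)).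
Proof. by move=> h; rewrite /fixcount fixset_S card_Sset. Qed.
End S.



Lemma det2 (C : comRingType) (B : 'M[C]_2) :
  \det B = B 0 0 * B 1 1 - B 0 1 * B 1 0.
Proof.
rewrite (expand_det_row _ 0) !big_ord_recr big_ord0 /= add0r /cofactor.
rewrite !det_mx11 !mxE /=.
have -> : widen_ord (leqnSn 1) ord_max = 0 :> 'I_2 by apply: val_inj.
have -> : lift 0 (0 : 'I_1) = 1 :> 'I_2 by apply: val_inj.
have -> : lift (ord_max : 'I_2) (0 : 'I_1) = 0 :> 'I_2 by apply: val_inj.
have -> : (ord_max : 'I_2) = 1 by apply: val_inj.
rewrite expr0 expr1; ring.
Qed.

Lemma tr2 (C : comRingType) (B : 'M[C]_2) : \tr B = B 0 0 + B 1 1.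
Proof. by rewrite /mxtrace !big_ord_recr big_ord0 /= add0r; congr (B _ _ + B _ _); apply: val_inj. Qed.

Lemma detB1 (C : comRingType) (B : 'M[C]_2) : \det (B - 1) = \det B - \tr B + 1.
Proof. rewrite !det2 tr2 !mxE /=; ring. Qed.
Lemma detD1 (C : comRingType) (B : 'M[C]_2) : \det (B + 1) = \det B + \tr B + 1.
Proof. rewrite !det2 tr2 !mxE /=; ring. Qed.
Lemma sqB1 (C : comRingType) (B : 'M[C]_2) : B ^+ 2 - 1 = (B - 1) *m (B + 1).
Proof. by rewrite mulmxE mulrDr mulr1 !mulrBl mul1r expr2 addrA subrK. Qed.


Lemma eig2 (F : fieldType) (B : 'M[F]_2) z :
  z ^+ 2 - \tr B * z + \det B = 0 -> eigenvalue B z.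
Proof.
move=> h; rewrite eigenvalue_root_char /root horner_coef size_char_poly.
rewrite !big_ord_recr big_ord0 /= add0r.
have c2 := char_poly_monic B; move/monicP: c2.
rewrite lead_coefE size_char_poly /= => c2.
have c1 := @char_poly_trace _ _ B isT.
have c0 := char_poly_det B.
rewrite c2 c0 c1 /= -h; apply/eqP; rewrite expr0 expr1 sqrrN expr1n; ring.
Qed.


Lemma unit_root (t : int) : (-2 <= t <= 2)%R ->
  exists z : algC, z ^+ 2 - t%:~R * z + 1 = 0 /\ `|z| = 1.
Proof.
move=> ht.
pose tc : algC := t%:~R.
have hx : (0 : algC) <= 1 - tc ^+ 2 / 4.
  have h4 : (tc ^+ 2 <= 4).
    have : (t ^+ 2 <= 4)%R by nia.
    by rewrite -(ler_int algC) /tc rmorphXn.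
  rewrite subr_ge0 ler_pdivrMr ?ltr0n // mul1r.
  exact: h4.
pose s := sqrtC (1 - tc ^+ 2 / 4).
have s2 : s ^+ 2 = 1 - tc ^+ 2 / 4 by rewrite sqrtCK.
have sc : s^* = s by apply/CrealP; apply: ger0_real; rewrite sqrtC_ge0.
have tcc : tc^* = tc by rewrite /tc conj_intr.
have ii : 'i * 'i = -1 :> algC by rewrite -expr2 sqrCi.
pose z := tc / 2 + 'i * s.
exists z; split.
  have -> : z ^+ 2 - tc * z + 1 = ('i * 'i) * s ^+ 2 + (1 - tc ^+ 2 / 4).
    by rewrite /z; field.
  by rewrite ii s2; ring.
have zc : z^* = tc / 2 - 'i * s.
  have ci : ('i : algC)^* = - 'i by exact: conjCi.
  have c2 : (2 : algC)^-1^* = 2^-1 by rewrite fmorphV rmorph_nat.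
  by rewrite /z rmorphD !rmorphM /= ci tcc sc c2 mulNr.
have : `|z| ^+ 2 = 1.
  rewrite normCK zc.
  have -> : z * (tc / 2 - 'i * s) = - ('i * 'i) * s ^+ 2 + tc ^+ 2 / 4.
    by rewrite /z; field.
  by rewrite ii s2; field.
by move/eqP; rewrite sqrp_eq1 // => /eqP.
Qed.


Lemma abs_pos (x : int) : 0 <= x -> (absz x)%:Z = x.
Proof. by move=> h; rewrite abszE ger0_norm. Qed.
Lemma abs_neg (x : int) : x <= 0 -> (absz x)%:Z = - x.
Proof. by move=> h; rewrite abszE ler0_norm. Qed.



Lemma fin (d d' t t' : int) :
  (d = 1 /\ (t <= -3 \/ 3 <= t) \/ d = -1 /\ t != 0) ->
  (d' = 1 /\ (t' <= -3 \/ 3 <= t') \/ d' = -1 /\ t' != 0) ->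
  absz (d - t + 1) = absz (d' - t' + 1) ->
  absz ((d - t + 1) * (d + t + 1)) = absz ((d' - t' + 1) * (d' + t' + 1)) ->
  d' = d /\ (t' = t \/ (t' = - t /\ d = -1)).
Proof.
move=> h h' /(congr1 Posz) e1 /(congr1 Posz) e2.
have F (dd tt : int) : (dd = 1 /\ (tt <= -3 \/ 3 <= tt) \/ dd = -1 /\ tt != 0) ->
   (dd = 1 /\ (absz ((dd - tt + 1) * (dd + tt + 1)))%:Z = tt * tt - 4 /\
      ((absz (dd - tt + 1))%:Z = tt - 2 /\ 3 <= tt \/ (absz (dd - tt + 1))%:Z = 2 - tt /\ tt <= -3))
   \/ (dd = -1 /\ (absz ((dd - tt + 1) * (dd + tt + 1)))%:Z = tt * tt /\
      ((absz (dd - tt + 1))%:Z = tt /\ 0 < tt \/ (absz (dd - tt + 1))%:Z = - tt /\ tt < 0)).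
  case=> [[-> [ht|ht]]|[-> ht]].
  - left; split => //; split.
      by rewrite abs_neg; [ring | nia].
    by right; rewrite abs_pos; [split=> //; ring | lia].
  - left; split => //; split.
      by rewrite abs_neg; [ring | nia].
    by left; rewrite abs_neg; [split=> //; ring | lia].
  - right; split => //; split.
      by rewrite abs_neg; [ring | nia].
    have [tp|tn] := ltP 0 tt.
      by left; rewrite abs_neg; [split=> //; ring | lia].
    right; rewrite abs_pos; [split; [ring|lia] | lia].
case: (F _ _ h) => [[hd [a b]]|[hd [a b]]]; case: (F _ _ h') => [[hd' [a' b']]|[hd' [a' b']]];
  rewrite ?hd ?hd'; move: e1 e2; rewrite a a'; case: b => [[-> ?]|[-> ?]];
  case: b' => [[-> ?]|[-> ?]] => e1 e2; try (split => //; nia); exfalso; nia.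
Qed.

Lemma hyp_facts (M : 'M[int]_2) : GL2Z M -> hyperbolic M ->
  (\det M = 1 /\ (\tr M <= -3 \/ 3 <= \tr M)) \/ (\det M = -1 /\ \tr M != 0).
Proof.
rewrite /GL2Z unitmxE => hu hh.
pose Mc := map_mx (intr : int -> algC) M.
have hh' : forall z, eigenvalue Mc z -> `|z| != 1 := hh.
have trc : \tr Mc = (\tr M)%:~R by rewrite !tr2 !mxE intrD.
have detc : \det Mc = (\det M)%:~R by rewrite !det2 !mxE intrB !intrM.
case/orP: hu => /eqP hd.
- left; split => //.
  case: (boolP ((\tr M <= -3) || (3 <= \tr M))) => [/orP[]|]; [by left|by right|].
  rewrite negb_or -!ltNge => /andP[h1 h2].
  have [|z [ez nz]] := @unit_root (\tr M); first by lia.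
  have E : eigenvalue Mc z.
    by apply: eig2; rewrite trc detc hd rmorph1.
  by move: (hh' z E); rewrite nz eqxx.
- right; split => //; apply/negP => /eqP ht.
  have E : eigenvalue Mc 1.
    by apply: eig2; rewrite trc detc hd ht rmorphN1 rmorph0; ring.
  by move: (hh' 1 E); rewrite normr1 eqxx.
Qed.

Lemma zeta_ext (R : realType) (M M' : 'M[int]_2) :
  (forall m : nat, (0 < m)%N -> fixcount R M m = fixcount R M' m) ->
  forall t : R, zeta R M t = zeta R M' t.
Proof.
move=> h t; rewrite /zeta.
have -> : (fun n : nat => \sum_(1 <= m < n) ((fixcount R M m)%:R / m%:R * t ^+ m)) =
  (fun n : nat => \sum_(1 <= m < n) ((fixcount R M' m)%:R / m%:R * t ^+ m)).
  by apply/funext => n; apply: eq_big_nat => m /andP[m1 _]; rewrite h.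
by [].
Qed.

Theorem corollary16 (R : realType) (M M' : 'M[int]_2) :
  GL2Z M -> GL2Z M' -> hyperbolic M -> hyperbolic M' ->
  (forall m : nat, (0 < m)%N -> fixcount R M m = fixcount R M' m) ->
  (forall t : R, zeta R M t = zeta R M' t) /\
  \det M' = \det M /\
  (\tr M' = \tr M \/ (\tr M' = - \tr M /\ \det M = -1)).
Proof.
move=> gM gM' hM hM' hc; split.
  exact: zeta_ext.
have F := @hyp_facts M gM hM; have F' := @hyp_facts M' gM' hM'.
have cnt (B : 'M[int]_2) :
    (\det B = 1 /\ (\tr B <= -3 \/ 3 <= \tr B)) \/ (\det B = -1 /\ \tr B != 0) ->
    fixcount R B 1 = absz (\det B - \tr B + 1) /\
    fixcount R B 2 = absz ((\det B - \tr B + 1) * (\det B + \tr B + 1)).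
  move=> FB.
  have n1 : \det B - \tr B + 1 != 0 by case: FB => [[-> [h|h]]|[-> h]]; lia.
  have n2 : \det B + \tr B + 1 != 0 by case: FB => [[-> [h|h]]|[-> h]]; lia.
  split.
    by rewrite fixcount_det expr1 detB1.
  by rewrite fixcount_det sqB1 det_mulmx detB1 detD1 // mulf_neq0.
have [a1 a2] := cnt M F; have [b1 b2] := cnt M' F'.
apply: (@fin _ _ _ _ F F').
  by rewrite -a1 -b1 hc.
by rewrite -a2 -b2 hc.
Qed.
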